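(* For each $h\in[H]$ there exist maps $\zeta_h,\chi_h:\mathcal M\to\mathbb R^{L_h/|\mathcal O|}$ such that for all $M,M'\in\mathcal M$, $\mathcal W_F(M,M',h)=\langle\zeta_h(M),\chi_h(M')\rangle$, and $\|\zeta_h(M)\|_2\|\chi_h(M')\|_2\le O(L_h/K)$.
   Context: Factored MDP setting: $\mathcal O$ finite, $\mathcal X=[H]\times\mathcal O^d$ layered by time, $|\mathcal A|=K$; known parent sets $\mathrm{pa}_i\subseteq[d]$; transitions $P(x'|x,a)=\prod_{i=1}^dP^{(i)}[x'[i]\mid x[\mathrm{pa}_i],a,h]$ for $x\in\mathcal X_h$; known reward $R^\star$ shared by all models; $\mathcal M$ is the set of all models with reward $R^\star$ and transitions factorizing with these parents, and the true model $M^\star\in\mathcal M$. $L_h=\sum_{i=1}^dK|\mathcal O|^{1+|\mathrm{pa}_i|}$. For a model $M$, $\pi_M$ is its greedy optimal policy; $x_h\sim\pi$ is the step-$h$ context when running $\pi$ in the true MDP; $(r,x')\sim M_h$ means $r\sim R^\star(x_h,a_h)$, $x'\sim P(x_h,a_h)$. Test class $\mathcal F=\{g_1+\dots+g_d:g_i\in\mathcal G_i\}$, $\mathcal G_i$ the set of all $\{-1,1\}$-valued functions of $(x,a,r,x')$ depending only on $(x[\mathrm{pa}_i],a,h,x'[i])$. $\mathcal W_F(M,M',h)=\max_{f\in\mathcal F}\mathbb E_{x_h\sim\pi_M,a_h\sim U(\mathcal A)}[\mathbb E_{(r,x')\sim M'_h}f(x_h,a_h,r,x')-\mathbb E_{(r,x')\sim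 M^\star_h}f(x_h,a_h,r,x')]$. *)

(* Defs.v *)
From HB Require Import structures.
From mathcomp Require Import all_boot all_order all_algebra.
From mathcomp Require Import boolp classical_sets reals.
Set Implicit Arguments. Unset Strict Implicit. Unset Printing Implicit Defensive.
Import Order.TTheory GRing.Theory Num.Theory.
Local Open Scope ring_scope.
Local Open Scope classical_set_scope.

(* Factored MDP with layers h = 0, ..., H-1 (0-indexed version of [H]).
   A context at layer h is (h, x) with x : O^d, represented by x : state and
   the layer index h kept separately. *)
Section FMDP.
Variables (R : realType) (O A : finType) (d : nat) (pa : 'I_d -> {set 'I_d}).

Definition state := {ffun 'I_d -> O}.

(* A model's transition factors: M h i x a o = P^(i)[o | x[pa_i], a, h]. *)
Definition model := nat -> 'I_d -> state -> A -> O -> R.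

Definition policy := nat -> state -> A.

Definition dep_pa (i : 'I_d) (T : Type) (f : state -> T) : Prop :=
  forall x y : state, (forall j, j \in pa i -> x j = y j) -> f x = f y.

(* Membership in the model class \mathcal M (rewards are the shared R^star). *)
Definition in_class (M : model) : Prop :=
  forall (h : nat) (i : 'I_d) (a : A),
    (forall o, dep_pa i (fun x => M h i x a o)) /\
    (forall x, (forall o, 0 <= M h i x a o) /\ \sum_(o : O) M h i x a o = 1).

Definition Pfull (M : model) (h : nat) (x : state) (a : A) (x' : state) : R :=
  \prod_(i < d) M h i x a (x' i).

Definition Lh : nat := \sum_(i < d) #|A| * #|O| ^ (1 + #|pa i|).

Variables (H : nat) (rbar : nat -> state -> A -> R).
(* rbar h x a = mean of the known reward distribution R^star(x, a) at layer h. *)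

Fixpoint Vrem (M : model) (n h : nat) (x : state) : R :=
  match n with
  | 0 => 0
  | n'.+1 => sup (range (fun a : A =>
        rbar h x a + \sum_(x' : state) Pfull M h x a x' * Vrem M n' h.+1 x'))
  end.

Definition Vopt (M : model) (h : nat) (x : state) : R := Vrem M (H - h) h x.

Definition Qopt (M : model) (h : nat) (x : state) (a : A) : R :=
  rbar h x a + \sum_(x' : state) Pfull M h x a x' * Vopt M h.+1 x'.

Definition greedy_opt (M : model) (pi : policy) : Prop :=
  forall h, (h < H)%N -> forall (x : state) (a : A), Qopt M h x a <= Qopt M h x (pi h x).

Variables (Mstar : model) (d0 : state -> R).

Fixpoint occ (pi : policy) (h : nat) : state -> R :=
  match h with
  | 0 => d0
  | h'.+1 => fun x' => \sum_(x : state) occ pi h' x * Pfull Mstar h' x (pi h' x) x'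
  end.

(* Test functions: (g_1, ..., g_d), g_i : (x, a, x'[i]) -> {-1,1}, coded by bool. *)
Definition testfun := {ffun 'I_d -> {ffun (state * A * O) -> bool}}.

Definition in_F (G : testfun) : Prop :=
  forall (i : 'I_d) (a : A) (o : O), dep_pa i (fun x => G i (x, a, o)).

Definition sgn (b : bool) : R := if b then 1 else -1.

(* f(x, a, r, x') = sum_i g_i(x[pa_i], a, h, x'[i])  (independent of r). *)
Definition fval (G : testfun) (x : state) (a : A) (x' : state) : R :=
  \sum_(i < d) sgn (G i (x, a, x' i)).

Definition gap (pi : policy) (M' : model) (h : nat) (G : testfun) : R :=
  \sum_(x : state) \sum_(a : A) occ pi h x * (#|A|%:R)^-1 *
    (\sum_(x' : state) Pfull M' h x a x' * fval G x a x'
     - \sum_(x' : state) Pfull Mstar h x a x' * fval G x a x').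

(* W_F(M, M', h), with pi = pi_M. *)
Definition WF (pi : policy) (M' : model) (h : nat) : R :=
  sup [set gap pi M' h G | G in [set G | in_F G]].

End FMDP.

Definition dotv (R : realType) n (u v : 'rV[R]_n) : R := \sum_(j < n) u 0 j * v 0 j.
Definition norm2 (R : realType) n (u : 'rV[R]_n) : R := Num.sqrt (\sum_(j < n) u 0 j ^+ 2).

(* Main.v *)
Require Import Defs.
From HB Require Import structures.
From mathcomp Require Import all_boot all_order all_algebra.
From mathcomp Require Import boolp classical_sets reals.
From mathcomp Require Import lra.
Import Order.TTheory GRing.Theory Num.Theory.
Local Open Scope ring_scope.

Lemma marg (R : realType) (O : finType) d (p : 'I_d -> O -> R) (i : 'I_d) (f : O -> R) :
  (forall j, \sum_o p j o = 1) ->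
  \sum_(x : {ffun 'I_d -> O}) (\prod_(j < d) p j (x j)) * f (x i) = \sum_o p i o * f o.
Proof.
move=> hp.
pose q j o := if j == i then p j o * f o else p j o.
transitivity (\sum_(x : {ffun 'I_d -> O}) \prod_(j < d) q j (x j)).
  apply: eq_bigr => x _; rewrite (bigD1 i) //= [in RHS](bigD1 i) //= /q eqxx.
  rewrite mulrAC; congr (_ * _); apply: eq_bigr => j hj; by rewrite (negbTE hj).
transitivity (\prod_(j < d) \sum_o q j o); first by rewrite bigA_distr_bigA.
rewrite (bigD1 i) //= [X in _ * X]big1 ?mulr1; last first.
  by move=> j hj; rewrite /q (negbTE hj) hp.
by rewrite /q eqxx.
Qed.

Lemma total (R : realType) (O : finType) d (p : 'I_d -> O -> R) :
  (forall j, \sum_o p j o = 1) ->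
  \sum_(x : {ffun 'I_d -> O}) (\prod_(j < d) p j (x j)) = 1.
Proof. move=> hp; rewrite (_ : \sum_(x : {ffun 'I_d -> O}) \prod_(j < d) p j (x j) = \prod_(j < d) \sum_o p j o); last by rewrite bigA_distr_bigA.
by rewrite big1. Qed.

Lemma occ_ge0 (R : realType) (O A : finType) d pa (Mstar : model R O A d) d0 pi :
  in_class pa Mstar -> (forall x, 0 <= d0 x) -> forall h x, 0 <= occ Mstar d0 pi h x.
Proof.
move=> hM hd h; elim: h => [|h IH] x //=.
apply: sumr_ge0 => y _; apply: mulr_ge0 => //.
apply: prodr_ge0 => j _; exact: (proj1 ((proj2 (hM _ _ _)) _)).
Qed.

Lemma occ_sum1 (R : realType) (O A : finType) d pa (Mstar : model R O A d) d0 pi :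
  in_class pa Mstar -> \sum_x d0 x = 1 -> forall h, \sum_x occ Mstar d0 pi h x = 1.
Proof.
move=> hM hd h; elim: h => [|h IH] //=.
rewrite exchange_big /= -[RHS]IH; apply: eq_bigr => x _.
rewrite -mulr_sumr /Pfull (@total _ _ _ (fun j o => Mstar h j x (pi h x) o)) ?mulr1 //.
by move=> j; exact: (proj2 ((proj2 (hM _ _ _)) _)).
Qed.

Lemma sum_Pfval (R : realType) (O A : finType) d pa (M : model R O A d) h x a G :
  in_class pa M ->
  \sum_(x' : state O d) Pfull M h x a x' * fval R G x a x' =
  \sum_(i < d) \sum_o M h i x a o * sgn R (G i (x, a, o)).
Proof.
move=> hM; rewrite /fval.
under eq_bigr do rewrite mulr_sumr.
rewrite exchange_big /=; apply: eq_bigr => i _.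
rewrite /Pfull (@marg _ _ _ (fun j o => M h j x a o) i (fun o => sgn R (G i (x, a, o)))) //.
by move=> j; exact: (proj2 ((proj2 (hM _ _ _)) _)).
Qed.

Lemma gap_eq (R : realType) (O A : finType) d pa (Mstar M' : model R O A d) d0 pi h G :
  in_class pa Mstar -> in_class pa M' ->
  gap Mstar d0 pi M' h G = \sum_x \sum_a occ Mstar d0 pi h x * (#|A|%:R)^-1 *
     \sum_(i < d) \sum_o (M' h i x a o - Mstar h i x a o) * sgn R (G i (x, a, o)).
Proof.
move=> hS hM; rewrite /gap; apply: eq_bigr => x _; apply: eq_bigr => a _.
rewrite (@sum_Pfval _ _ _ _ pa Mstar h x a G hS) (@sum_Pfval _ _ _ _ pa M' h x a G hM) -sumrB; congr (_ * _).
apply: eq_bigr => i _; rewrite -sumrB; apply: eq_bigr => o _; by rewrite mulrBl.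
Qed.

Definition Vform (R : realType) (O A : finType) d (Mstar M' : model R O A d) d0 pi h : R :=
  \sum_x \sum_a occ Mstar d0 pi h x * (#|A|%:R)^-1 *
     \sum_(i < d) \sum_o `|M' h i x a o - Mstar h i x a o|.

Arguments Vform {R O A d}.

Lemma WF_eq (R : realType) (O A : finType) d pa (Mstar M' : model R O A d) d0 pi h :
  in_class pa Mstar -> in_class pa M' -> (forall x, 0 <= d0 x) ->
  WF pa Mstar d0 pi M' h = Vform Mstar M' d0 pi h.
Proof.
move=> hS hM hd.
pose Gs : testfun O A d := [ffun i => [ffun t : state O d * A * O =>
   (Mstar h i t.1.1 t.1.2 t.2 <= M' h i t.1.1 t.1.2 t.2)]].
have GsF : in_F pa Gs.
  move=> i a o x y hxy; rewrite !ffunE /=.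
  by rewrite ((proj1 (hS h i a)) o x y hxy) ((proj1 (hM h i a)) o x y hxy).
have gapGs : gap Mstar d0 pi M' h Gs = Vform Mstar M' d0 pi h.
  rewrite (@gap_eq _ _ _ _ pa Mstar M' d0 pi h _ hS hM) /Vform.
  apply: eq_bigr => x _; apply: eq_bigr => a _; congr (_ * _).
  apply: eq_bigr => i _; apply: eq_bigr => o _; rewrite !ffunE /= /sgn.
  case: leP => hle.
    by rewrite mulr1 ger0_norm // subr_ge0.
  by rewrite mulrN1 ltr0_norm // subr_lt0.
have ub : forall G, gap Mstar d0 pi M' h G <= Vform Mstar M' d0 pi h.
  move=> G; rewrite (@gap_eq _ _ _ _ pa Mstar M' d0 pi h _ hS hM) /Vform.
  apply: ler_sum => x _; apply: ler_sum => a _.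
  apply: ler_wpM2l.
    by apply: mulr_ge0; [exact: (@occ_ge0 _ _ _ _ pa Mstar d0 pi hS hd) | rewrite invr_ge0].
  apply: ler_sum => i _; apply: ler_sum => o _; rewrite /sgn.
  case: (G i (x, a, o)); first by rewrite mulr1 ler_norm.
  by rewrite mulrN1 -normrN ler_norm.
rewrite /WF; apply/eqP; rewrite eq_le; apply/andP; split.
  apply: ge_sup; first by exists (gap Mstar d0 pi M' h Gs), Gs.
  by move=> _ [G _ <-].
rewrite -gapGs; apply: sup_upper_bound; last by exists Gs.
split; first by exists (gap Mstar d0 pi M' h Gs), Gs.
by exists (Vform Mstar M' d0 pi h) => _ [G _ <-].
Qed.

Set Implicit Arguments. Unset Strict Implicit.

Definition mkrow (R : realType) (T : finType) n (e : #|T| = n) (f : T -> R) : 'rV[R]_n :=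
  \row_(j < n) f (enum_val (cast_ord (esym e) j)).

Lemma sum_mkrow (R : realType) (T : finType) n (e : #|T| = n) (F : R -> R -> R) (f g : T -> R) :
  \sum_(j < n) F (mkrow e f 0 j) (mkrow e g 0 j) = \sum_t F (f t) (g t).
Proof.
case: n / e; rewrite /mkrow.
under eq_bigr do rewrite !mxE cast_ord_id.
rewrite (reindex enum_rank) /=; last first.
  by apply: onW_bij; exact: enum_rank_bij.
by apply: eq_bigr => t _; rewrite enum_rankK.
Qed.

Lemma dot_mkrow (R : realType) (T : finType) n (e : #|T| = n) (f g : T -> R) :
  dotv (mkrow e f) (mkrow e g) = \sum_t f t * g t.
Proof. exact: (sum_mkrow e (fun u v => u * v)). Qed.

Lemma norm_mkrow (R : realType) (T : finType) n (e : #|T| = n) (f : T -> R) :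
  norm2 (mkrow e f) = Num.sqrt (\sum_t f t ^+ 2).
Proof.
rewrite /norm2; congr Num.sqrt.
exact: (sum_mkrow e (fun u v => u ^+ 2) f f).
Qed.

Definition Sp d (pa : 'I_d -> {set 'I_d}) (i : 'I_d) : finType := {j : 'I_d | j \in pa i}.
Definition Tp (O A : finType) d (pa : 'I_d -> {set 'I_d}) (i : 'I_d) : finType :=
  (A * {ffun Sp pa i -> O})%type.
Definition Ty (O A : finType) d (pa : 'I_d -> {set 'I_d}) : finType := {i : 'I_d & Tp O A pa i}.
Definition proj (O : finType) d (pa : 'I_d -> {set 'I_d}) i (x : state O d) : {ffun Sp pa i -> O} :=
  [ffun s => x (val s)].
Definition ext (O : finType) d (pa : 'I_d -> {set 'I_d}) i (o0 : O) (u : {ffun Sp pa i -> O}) : state O d :=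
  [ffun j => if (insub j : option (Sp pa i)) is Some s then u s else o0].

Arguments ext {O d} pa {i} o0 u.
Arguments proj {O d} pa i x.

Lemma ext_proj (O : finType) d (pa : 'I_d -> {set 'I_d}) i (o0 : O) (x : state O d) j :
  j \in pa i -> ext pa o0 (proj pa i x) j = x j.
Proof. by move=> hj; rewrite /ext ffunE insubT /= ffunE. Qed.

Lemma card_Ty (O A : finType) d (pa : 'I_d -> {set 'I_d}) :
  #|Ty O A pa| = (\sum_(i < d) #|A| * #|O| ^ #|pa i|)%N.
Proof.
rewrite -sum1_card /Ty.
rewrite -(@sig_big_dep _ _ _ _ (fun i => Tp O A pa i) xpredT (fun _ => xpredT) (fun _ _ => 1%N)).
apply: eq_bigr => i _; rewrite sum1_card /Tp card_prod card_ffun /Sp card_sig.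
by congr (_ * _ ^ _)%N; apply: eq_card.
Qed.

Lemma Lh_div (O A : finType) d (pa : 'I_d -> {set 'I_d}) :
  (0 < #|O|)%N -> (Lh O A pa %/ #|O| = \sum_(i < d) #|A| * #|O| ^ #|pa i|)%N.
Proof.
move=> hO; rewrite /Lh.
rewrite (eq_bigr (fun i => (#|A| * #|O| ^ #|pa i|) * #|O|)%N); last first.
  by move=> i _; rewrite add1n expnS mulnCA mulnC.
by rewrite -big_distrl /= mulnK.
Qed.

Definition rho (R : realType) (O : finType) d (pa : 'I_d -> {set 'I_d}) (w : state O d -> R) i
  (u : {ffun Sp pa i -> O}) : R := \sum_(x | proj pa i x == u) w x.

Arguments rho {R O d} pa w {i} u.

Lemma regroup (R : realType) (O A : finType) d (pa : 'I_d -> {set 'I_d}) (o0 : O)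
  (w : state O d -> R) (D : 'I_d -> state O d -> A -> R) :
  (forall i (a : A) (x y : state O d), (forall j, j \in pa i -> x j = y j) -> D i x a = D i y a) ->
  \sum_(x : state O d) \sum_(a : A) w x * \sum_(i < d) D i x a =
  \sum_(t : Ty O A pa) rho pa w (tagged t).2 * D (tag t) (ext pa o0 (tagged t).2) (tagged t).1.
Proof.
move=> hD.
transitivity (\sum_(i < d) \sum_(a : A) \sum_(x : state O d) w x * D i x a).
  under eq_bigr do under eq_bigr do rewrite mulr_sumr.
  under eq_bigr do rewrite exchange_big /=.
  rewrite exchange_big /=; apply: eq_bigr => i _; by rewrite exchange_big.
transitivity (\sum_(i < d) \sum_(p : Tp O A pa i) rho pa w p.2 * D i (ext pa o0 p.2) p.1); last first.
  exact: (sig_big_dep xpredT (fun _ => xpredT)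
     (fun i (p : Tp O A pa i) => rho pa w p.2 * D i (ext pa o0 p.2) p.1)).
apply: eq_bigr => i _.
rewrite /Tp -(pair_big xpredT xpredT (fun a (u : {ffun Sp pa i -> O}) => rho pa w u * D i (ext pa o0 u) a)) /=.
apply: eq_bigr => a _.
rewrite (partition_big (proj pa i) xpredT) //=; apply: eq_bigr => u _.
rewrite /rho mulr_suml; apply: eq_big => [x // | x /eqP hx].
congr (_ * _); rewrite -hx; apply: hD => j hj; by rewrite ext_proj.
Qed.

Lemma rho_ge0 (R : realType) (O : finType) d (pa : 'I_d -> {set 'I_d}) (w : state O d -> R) i u :
  (forall x, 0 <= w x) -> 0 <= rho pa w (i:=i) u.
Proof. by move=> hw; apply: sumr_ge0. Qed.

Lemma rho_le (R : realType) (O : finType) d (pa : 'I_d -> {set 'I_d}) (w : state O d -> R) i u :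
  (forall x, 0 <= w x) -> rho pa w (i:=i) u <= \sum_x w x.
Proof.
move=> hw; rewrite /rho [X in _ <= X](bigID (fun x => proj pa i x == u)) /= lerDl.
by apply: sumr_ge0.
Qed.

Lemma rho_sum (R : realType) (O : finType) d (pa : 'I_d -> {set 'I_d}) (w : state O d -> R) i :
  \sum_(u : {ffun Sp pa i -> O}) rho pa w u = \sum_x w x.
Proof.
by rewrite [RHS](partition_big (proj pa i) xpredT).
Qed.

Lemma Sz_bound (R : realType) (O A : finType) d (pa : 'I_d -> {set 'I_d}) (w : state O d -> R) (c : R) :
  (forall x, 0 <= w x) -> \sum_x w x = 1 ->
  \sum_(t : Ty O A pa) (rho pa w (tagged t).2 * c) ^+ 2 <= (c ^+ 2 *+ #|A|) *+ d.
Proof.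
move=> hw h1.
apply: (@le_trans _ _ (\sum_(t : Ty O A pa) rho pa w (tagged t).2 * c ^+ 2)).
  apply: ler_sum => t _; rewrite exprMn; apply: ler_wpM2r; first exact: sqr_ge0.
  rewrite expr2; apply: ler_piMr; first exact: rho_ge0.
  by rewrite -h1; apply: rho_le.
have -> : \sum_(t : Ty O A pa) rho pa w (tagged t).2 * c ^+ 2 =
    \sum_(i < d) \sum_(p : Tp O A pa i) rho pa w p.2 * c ^+ 2.
  symmetry; exact: (sig_big_dep xpredT (fun _ => xpredT)
     (fun i (p : Tp O A pa i) => rho pa w p.2 * c ^+ 2)).
apply: (@le_trans _ _ (\sum_(i < d) (c ^+ 2 *+ #|A|))); last by rewrite sumr_const card_ord.
apply: ler_sum => i _.
rewrite /Tp -(pair_big xpredT xpredT (fun a (u : {ffun Sp pa i -> O}) => rho pa w u * c ^+ 2)) /=.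
apply: (@le_trans _ _ (\sum_(a : A) c ^+ 2)); last by rewrite sumr_const.
apply: ler_sum => a _.
by rewrite -mulr_suml rho_sum h1 mul1r.
Qed.

Lemma Lh_mul (O A : finType) d (pa : 'I_d -> {set 'I_d}) :
  Lh O A pa = ((\sum_(i < d) #|A| * #|O| ^ #|pa i|) * #|O|)%N.
Proof.
rewrite /Lh big_distrl /=; apply: eq_bigr => i _.
by rewrite add1n expnS mulnCA mulnC.
Qed.

Lemma dK_le (O A : finType) d (pa : 'I_d -> {set 'I_d}) :
  (0 < #|O|)%N -> (d * #|A| <= \sum_(i < d) #|A| * #|O| ^ #|pa i|)%N.
Proof.
move=> hO; rewrite -[X in (X * _)%N]card_ord -sum_nat_const.
by apply: leq_sum => i _; rewrite leq_pmulr // expn_gt0 hO.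
Qed.

Lemma final_arith (R : realType) (k oo dd nn Sz Sc : R) :
  0 < k -> 1 <= oo -> 0 <= dd -> 0 <= nn -> dd * k <= nn ->
  0 <= Sz -> 0 <= Sc -> Sz <= k^-1 ^+ 2 * k * dd -> Sc <= 4 * nn ->
  Sz * Sc <= (2 * (nn * oo / k)) ^+ 2.
Proof.
move=> hk ho hd hn hdn hz hc hSz hSc.
set ik := k^-1.
have hik : 0 < ik by rewrite invr_gt0.
have kik : k * ik = 1 by rewrite mulfV // gt_eqF.
have e1 : ik ^+ 2 * k * dd = ik * dd.
  by rewrite expr2 -(mulrA ik ik k) [ik * k]mulrC kik mulr1.
rewrite e1 in hSz.
have h2 : ik * dd <= ik ^+ 2 * nn.
  have := ler_wpM2l (ltW (exprn_gt0 2 hik)) hdn.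
  by rewrite mulrA -e1 [_ * k * _]mulrAC.
apply: (@le_trans _ _ ((ik * dd) * (4 * nn))).
  apply: ler_pM => //.
apply: (@le_trans _ _ ((ik ^+ 2 * nn) * (4 * nn))).
  by apply: ler_wpM2r => //; nra.
rewrite /ik; set j := k^-1.
have hj : 0 < j by rewrite invr_gt0.
have : 1 <= oo ^+ 2 by nra.
move=> ho2.
have : 0 <= j ^+ 2 * nn * nn by apply: mulr_ge0 => //; apply: mulr_ge0 => //; exact: sqr_ge0.
nra.
Qed.

Unset Implicit Arguments.

Theorem mainTheorem10 (R : realType) :
  exists C : R, 0 < C /\
  forall (O A : finType) (d H : nat) (pa : 'I_d -> {set 'I_d})
         (rbar : nat -> state O d -> A -> R) (d0 : state O d -> R)
         (Mstar : model R O A d) (pi : model R O A d -> policy O A d),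
    (0 < #|O|)%N -> (0 < #|A|)%N ->
    (forall x, 0 <= d0 x) -> \sum_(x : state O d) d0 x = 1 ->
    in_class pa Mstar ->
    (forall M, in_class pa M -> greedy_opt H rbar M (pi M)) ->
    forall h : nat, (h < H)%N ->
    exists zeta chi : model R O A d -> 'rV[R]_(Lh O A pa %/ #|O|),
      forall M M' : model R O A d, in_class pa M -> in_class pa M' ->
        WF pa Mstar d0 (pi M) M' h = dotv (zeta M) (chi M') /\
        norm2 (zeta M) * norm2 (chi M') <= C * ((Lh O A pa)%:R / (#|A|)%:R).
Proof.
exists 2; split; first lra.
move=> O A d H pa rbar d0 Mstar pi hO hA hd0 hd1 hS _ h _.
have [o0 _] : exists o0 : O, o0 \in O by apply/card_gt0P.
have e : #|Ty O A pa| = (Lh O A pa %/ #|O|)%N by rewrite Lh_div // card_Ty.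
pose w (M : model R O A d) x := occ Mstar d0 (pi M) h x * (#|A|%:R)^-1.
pose D (M' : model R O A d) i (x : state O d) (a : A) :=
  \sum_o `|M' h i x a o - Mstar h i x a o|.
exists (fun M => mkrow e (fun t => rho pa (w M) (tagged t).2)).
exists (fun M' => mkrow e (fun t => D M' (tag t) (ext pa o0 (tagged t).2) (tagged t).1)).
move=> M M' hM hM'; split.
  rewrite dot_mkrow (@WF_eq _ _ _ _ pa Mstar M' d0 (pi M) h hS hM' hd0) /Vform.
  apply: (@regroup R O A d pa o0 (w M) (D M')).
  move=> i a x y hxy; apply: eq_bigr => o _.
  by rewrite ((proj1 (hM' h i a)) o x y hxy) ((proj1 (hS h i a)) o x y hxy).
have hocc := @occ_ge0 _ _ _ _ pa Mstar d0 (pi M) hS hd0 h.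
have hocc1 := @occ_sum1 _ _ _ _ pa Mstar d0 (pi M) hS hd1 h.
have hk : 0 < (#|A|%:R : R) by rewrite ltr0n.
rewrite !norm_mkrow -sqrtrM; last by apply: sumr_ge0 => t _; exact: sqr_ge0.
set Sz := \sum_t _; set Sc := \sum_t _.
have hSz : Sz <= ((#|A|%:R : R)^-1 ^+ 2 *+ #|A|) *+ d.
  rewrite /Sz (eq_bigr (fun t : Ty O A pa => (rho pa (occ Mstar d0 (pi M) h) (tagged t).2 * (#|A|%:R)^-1) ^+ 2)).
    by apply: Sz_bound.
  by move=> t _; rewrite /rho mulr_suml.
have hSc : Sc <= 4 *+ #|Ty O A pa|.
  apply: (@le_trans _ _ (\sum_(t : Ty O A pa) (4 : R))); last by rewrite sumr_const.
  apply: ler_sum => t _.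
  set y := ext pa o0 (tagged t).2; set i := tag t; set a := (tagged t).1.
  have h0 : 0 <= D M' i y a by apply: sumr_ge0 => o _.
  have h2 : D M' i y a <= 2.
    apply: (@le_trans _ _ (\sum_o (M' h i y a o + Mstar h i y a o))).
      apply: ler_sum => o _; apply: (le_trans (ler_normB _ _)).
      rewrite !ger0_norm //.
        exact: (proj1 ((proj2 (hS h i a)) y)).
      exact: (proj1 ((proj2 (hM' h i a)) y)).
    rewrite big_split /= (proj2 ((proj2 (hS h i a)) y)) (proj2 ((proj2 (hM' h i a)) y)).
    by lra.
  nra.
have hLh : (Lh O A pa)%:R = (#|Ty O A pa|%:R : R) * #|O|%:R.
  by rewrite Lh_mul card_Ty natrM.
have hdn : (d%:R : R) * #|A|%:R <= #|Ty O A pa|%:R.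
  by rewrite -natrM ler_nat card_Ty dK_le.
rewrite hLh -(@ger0_norm _ (2 * _)); last first.
  apply: mulr_ge0 => //; apply: mulr_ge0; last by rewrite invr_ge0 ltW.
  by apply: mulr_ge0.
rewrite -sqrtr_sqr ler_sqrt ?sqr_ge0 //.
apply: (final_arith (dd := d%:R)) => //.
all: try (by rewrite ler1n).
- by apply: sumr_ge0 => t _; exact: sqr_ge0.
- by apply: sumr_ge0 => t _; exact: sqr_ge0.
- apply: (le_trans hSz); rewrite -(mulr_natr (_ *+ #|A|) d) -(mulr_natr ((#|A|%:R : R)^-1 ^+ 2) #|A|).
  by [].
- apply: (le_trans hSc); rewrite mulrC mulr_natr.
  rewrite -(mulr_natr (4:R) #|Ty O A pa|) -(mulr_natr (#|Ty O A pa|%:R : R) 4) mulrC.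
  by [].
Qed.
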